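(* Let $P^{(1)},\dots,P^{(m)}$ be phase-free $n$-qubit Pauli strings given in sparse form, with weights $w_i=\operatorname{wt}(P^{(i)})$. In the computational model where dictionary lookup and update for a key of length $r$ cost $O(r)$ expected time, the locality-zeta counting algorithm (which for $i=1,\dots,m$ computes $c_i=(N-Z)/2$ with $Z=\sum_{A\subseteq\operatorname{supp}(P^{(i)})}(-2)^{|A|}\sum_{a\in\mathcal{L}_{P^{(i)}}(A)}D[(A,a)]$, adds $c_i$ to a running total, then increments $D[(A,P^{(i)}|_A)]$ for every $A\subseteq\operatorname{supp}(P^{(i)})$ and increments $N$; and returns the total, which is the number of unordered anticommuting pairs) runs in expected time \[ O\Big(\sum_{i=1}^m w_i3^{w_i}\Big) \] and uses space $O\big(\sum_{i=1}^m w_i2^{w_i}\big)$ for dictionary keys in addition to the input storage. In particular, if $w_i\le k$ for all $i$, the expected time is $O(mk3^k)$ and the additional space is $O(mk2^k)$.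
   Context: A phase-free $n$-qubit Pauli string is $P=(P_1,\dots,P_n)\in\{I,X,Y,Z\}^n$, stored sparsely as the pairs $(j,P_j)$, $j\in\operatorname{supp}(P)=\{j:P_j\neq I\}$; $\operatorname{wt}(P)=|\operatorname{supp}(P)|$. $D$ is a dictionary (initially empty, absent keys count as zero) with keys labeled patterns $(A,a)$, $A$ a set of positions, $a:A\to\{X,Y,Z\}$, of length $|A|$; $N$ starts at $0$. $\mathcal{L}_P(A)=\{a:A\to\{X,Y,Z\}: a(j)\neq P_j\ \forall j\in A\}$, and $P|_A$ is the labeling $j\mapsto P_j$ on $A$. *)

(* Defs.v *)
From HB Require Import structures.
From mathcomp Require Import all_boot all_order all_algebra.
Set Implicit Arguments. Unset Strict Implicit. Unset Printing Implicit Defensive.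
Import Order.TTheory GRing.Theory Num.Theory.

Inductive pauli1 := PX | PY | PZ.

Definition pauli1_code (p : pauli1) : 'I_3 :=
  match p with PX => inord 0 | PY => inord 1 | PZ => inord 2 end.
Definition pauli1_decode (i : 'I_3) : pauli1 :=
  match val i with 0 => PX | 1 => PY | _ => PZ end.
Lemma pauli1_codeK : cancel pauli1_code pauli1_decode.
Proof. by case; rewrite /pauli1_decode /= inordK. Qed.
HB.instance Definition _ := Equality.copy pauli1 (can_type pauli1_codeK).

(* A phase-free Pauli string in sparse form: list of pairs (j, P_j), P_j <> I. *)
Definition spauli := seq (nat * pauli1).

Definition wf_spauli (n : nat) (P : spauli) : bool :=
  uniq (map fst P) && all (fun q => q.1 < n) P.

Definition wt (P : spauli) : nat := size P.

(* All sub-lists of s: subsets A of supp(P), each represented together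
   with the restriction P|_A. *)
Fixpoint subseqs (T : Type) (s : seq T) : seq (seq T) :=
  match s with
  | [::] => [:: [::]]
  | x :: s' => let r := subseqs s' in r ++ map (cons x) r
  end.

Definition others (p : pauli1) : seq pauli1 :=
  filter (fun q => q != p) [:: PX; PY; PZ].

(* labelings in L_P(A), given PA = P|_A *)
Fixpoint labelings (PA : spauli) : seq spauli :=
  match PA with
  | [::] => [:: [::]]
  | (j, p) :: s' => [seq (j, q) :: l | q <- others p, l <- labelings s']
  end.

(* canonical representation of a labeled pattern (A, a) as a dictionary key *)
Definition key (l : spauli) : spauli := sort (fun x y => x.1 <= y.1) l.

Record alg_state := AlgState {
  st_D : spauli -> int;       (* the dictionary D (absent keys = 0) *)
  st_keys : seq spauli;       (* keys ever inserted into D *)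
  st_N : int;
  st_total : int;
  st_time : nat
}.

Definition init_state : alg_state := AlgState (fun _ => 0%R) [::] 0%R 0%R 0.

Definition incr (D : spauli -> int) (k : spauli) : spauli -> int :=
  fun k' => if k' == k then (D k' + 1)%R else D k'.

(* Cost model: each dictionary lookup/update on a key of length r costs r+1,
   generating a subset / labeling of length r costs r+1, and each
   arithmetic/bookkeeping step costs 1 (absorbed in these charges). *)
Definition alg_step (s : alg_state) (P : spauli) : alg_state :=
  let D := st_D s in
  let Z : int := (\sum_(A <- subseqs P)
                   (-2) ^+ size A * \sum_(a <- labelings A) D (key a))%R in
  let costZ := \sum_(A <- subseqs P)
                 ((size A).+1 + \sum_(a <- labelings A) ((size A).+1 + (size A).+1)) in
  let c : int := ((st_N s - Z) %/ 2)%Z in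
  let D' := foldl (fun D0 A => incr D0 (key A)) D (subseqs P) in
  let costU := \sum_(A <- subseqs P) ((size A).+1 + (size A).+1) in
  AlgState D' (st_keys s ++ map key (subseqs P)) (st_N s + 1)%R
           (st_total s + c)%R (st_time s + costZ + costU + 1).

Definition run_alg (Ps : seq spauli) : alg_state := foldl alg_step init_state Ps.

Definition alg_time (s : alg_state) : nat := st_time s.
Definition alg_result (s : alg_state) : int := st_total s.
Definition alg_space (s : alg_state) : nat :=
  \sum_(k <- undup (st_keys s)) (size k).+1.

(* Main.v *)
Require Import Defs.
From mathcomp Require Import all_boot all_order all_algebra.
From mathcomp Require Import zify.
Set Implicit Arguments. Unset Strict Implicit.

Lemma sum_const_seq (T : Type) (l : seq T) c : \sum_(x <- l) c = size l * c.
Proof. by elim: l => [|x l IH]; rewrite ?big_nil ?big_cons ?IH //= mulSn. Qed.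

Lemma size_others p : size (others p) = 2.
Proof. by case: p; rewrite /others /= /eq_op /= -!val_eqE /= !inordK. Qed.

Lemma size_flatmap (T U : Type) (s : seq T) (f : T -> seq U) k :
  (forall x, size (f x) = k) -> size (flatten (map f s)) = size s * k.
Proof. by move=> H; elim: s => [|x s IH] //=; rewrite size_cat IH H mulSn. Qed.

Lemma size_labelings A : size (labelings A) = 2 ^ size A.
Proof.
elim: A => [|[j p] A IH] //=.
rewrite (@size_flatmap _ _ _ _ (2 ^ size A)) ?size_others ?expnS //.
by move=> q; rewrite size_map IH.
Qed.

Lemma sum_subseqs_pow (T : Type) (s : seq T) :
  \sum_(A <- subseqs s) 2 ^ size A = 3 ^ size s.
Proof.
elim: s => [|x s IH] /=; first by rewrite big_cons big_nil.
rewrite big_cat big_map /=.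
have -> : \sum_(j <- subseqs s) 2 ^ (size j).+1 = 2 * 3 ^ size s.
  by rewrite -IH big_distrr; apply: eq_bigr => j _; rewrite expnS.
by rewrite IH expnS (_ : 3 = 1 + 2) // mulnDl mul1n.
Qed.

Lemma size_subseqs (T : Type) (s : seq T) : size (subseqs s) = 2 ^ size s.
Proof. by elim: s => [|x s IH] //=; rewrite size_cat size_map IH expnS mul2n addnn. Qed.

Lemma all_subseqs_size (T : Type) (s : seq T) :
  all (fun A => size A <= size s) (subseqs s).
Proof.
elim: s => [|x s IH] //=; rewrite all_cat all_map.
apply/andP; split.
  by apply: sub_all IH => A /= H; rewrite (leq_trans H).
by apply: sub_all IH => A /=.
Qed.

Lemma sum_le_all (T : Type) (s : seq T) (F G : T -> nat) (Q : pred T) :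
  all Q s -> (forall x, Q x -> F x <= G x) ->
  \sum_(x <- s) F x <= \sum_(x <- s) G x.
Proof.
move=> Hs H; elim: s Hs => [|x s IH] /=; first by rewrite !big_nil.
by case/andP=> Hx Hs; rewrite !big_cons leq_add // ?H // IH.
Qed.

Definition stepcost (P : spauli) : nat :=
  \sum_(A <- subseqs P)
     ((size A).+1 + \sum_(a <- labelings A) ((size A).+1 + (size A).+1)) +
  \sum_(A <- subseqs P) ((size A).+1 + (size A).+1) + 1.

Lemma time_run s Ps :
  st_time (foldl alg_step s Ps) = st_time s + \sum_(P <- Ps) stepcost P.
Proof.
elim: Ps s => [|P Ps IH] s /=; first by rewrite big_nil addn0.
rewrite IH big_cons /stepcost /=.
by rewrite !addnA.
Qed.

Lemma keys_run s Ps :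
  st_keys (foldl alg_step s Ps) =
  st_keys s ++ flatten (map (fun P => map key (subseqs P)) Ps).
Proof.
elim: Ps s => [|P Ps IH] s /=; first by rewrite cats0.
by rewrite IH catA.
Qed.

Lemma sum_undup_le (T : eqType) (s : seq T) (f : T -> nat) :
  \sum_(x <- undup s) f x <= \sum_(x <- s) f x.
Proof.
elim: s => [|x s IH] //=; case: (x \in s).
  by rewrite big_cons (leq_trans IH) // leq_addl.
by rewrite !big_cons leq_add2l.
Qed.

Lemma maxn_ge w : w.+1 <= 2 * maxn 1 w.
Proof. lia. Qed.

Lemma stepcost_le P : stepcost P <= 11 * (maxn 1 (wt P) * 3 ^ wt P).
Proof.
rewrite /stepcost /wt.
set w := size P.
have HA := all_subseqs_size P.
have H1 : \sum_(A <- subseqs P)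
     ((size A).+1 + \sum_(a <- labelings A) ((size A).+1 + (size A).+1))
   <= \sum_(A <- subseqs P) (3 * w.+1) * 2 ^ size A.
  apply: (sum_le_all HA) => A /= HAw.
  rewrite sum_const_seq size_labelings.
  have Hrw : size A <= w := HAw.
  have h1 : (size A).+1 * 2 ^ size A <= w.+1 * 2 ^ size A by rewrite leq_mul2r ltnS Hrw orbT.
  have h2 : (size A).+1 <= (size A).+1 * 2 ^ size A by rewrite leq_pmulr // expn_gt0.
  lia.
have H2 : \sum_(A <- subseqs P) ((size A).+1 + (size A).+1)
   <= \sum_(A <- subseqs P) (2 * w.+1).
  apply: (sum_le_all HA) => A /= HAw.
  by rewrite mul2n -addnn leq_add.
rewrite -big_distrr /= sum_subseqs_pow sum_const_seq size_subseqs in H1 H2.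
rewrite -/w in H2.
have H23 : 2 ^ w <= 3 ^ w by elim: (w) => [|v IHv] //; rewrite !expnS leq_mul.
have Hm := maxn_ge w.
have Hy : w.+1 * 3 ^ w <= 2 * (maxn 1 w * 3 ^ w) by rewrite mulnA leq_mul2r Hm orbT.
have Hz : 2 ^ w * (2 * w.+1) <= 2 * (w.+1 * 3 ^ w).
  apply: (@leq_trans (3 ^ w * (2 * w.+1))); first by rewrite leq_mul2r H23 orbT.
  by rewrite mulnC -mulnA.
have H1' : 3 * w.+1 * 3 ^ w = 3 * (w.+1 * 3 ^ w) by rewrite mulnA.
have H0 : 1 <= maxn 1 w * 3 ^ w by rewrite muln_gt0 expn_gt0 leq_maxl.
rewrite H1' in H1.
move: H1 H2 Hy Hz H0; generalize (2 ^ w * (2 * w.+1)) (w.+1 * 3 ^ w) (maxn 1 w * 3 ^ w) => z y m.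
move=> *; lia.
Qed.

Definition keyspace (P : spauli) : nat := \sum_(k <- map key (subseqs P)) (size k).+1.

Lemma keyspace_le P : keyspace P <= 2 * (maxn 1 (wt P) * 2 ^ wt P).
Proof.
rewrite /keyspace big_map.
have -> : \sum_(A <- subseqs P) (size (key A)).+1 = \sum_(A <- subseqs P) (size A).+1.
  by apply: eq_bigr => A _; rewrite /key size_sort.
apply: (@leq_trans (\sum_(A <- subseqs P) (wt P).+1)).
  by apply: (sum_le_all (all_subseqs_size P)).
rewrite sum_const_seq size_subseqs mulnC mulnA /wt.
by rewrite leq_mul2r maxn_ge orbT.
Qed.

Lemma space_run Ps :
  alg_space (run_alg Ps) <= \sum_(P <- Ps) keyspace P.
Proof.
rewrite /alg_space /run_alg keys_run /=.
apply: (leq_trans (sum_undup_le _ _)).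
elim: Ps => [|P Ps IH] /=; first by rewrite !big_nil.
by rewrite big_cat big_cons leq_add2l.
Qed.

Lemma sum_le_k (Ps : seq spauli) (F : nat -> nat) k :
  {homo F : a b / a <= b} -> all (fun P => wt P <= k) Ps ->
  \sum_(P <- Ps) F (wt P) <= size Ps * F k.
Proof.
move=> HF Hk; rewrite -sum_const_seq; apply: (sum_le_all Hk) => P /=; exact: HF.
Qed.

Lemma homo_f b (Hb : 0 < b) : {homo (fun w => maxn 1 w * b ^ w) : x y / x <= y}.
Proof.
move=> x y Hxy; apply: leq_mul.
  by rewrite geq_max leq_maxl /= (leq_trans Hxy) // leq_maxr.
by rewrite leq_pexp2l.
Qed.

Theorem theorem3 :
  exists C : nat,
  forall (n : nat) (Ps : seq spauli), all (wf_spauli n) Ps ->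
    alg_time (run_alg Ps) <= C * \sum_(P <- Ps) maxn 1 (wt P) * 3 ^ wt P /\
    alg_space (run_alg Ps) <= C * \sum_(P <- Ps) maxn 1 (wt P) * 2 ^ wt P /\
    (forall k : nat, all (fun P => wt P <= k) Ps ->
       alg_time (run_alg Ps) <= C * (size Ps * (maxn 1 k * 3 ^ k)) /\
       alg_space (run_alg Ps) <= C * (size Ps * (maxn 1 k * 2 ^ k))).
Proof.
exists 11 => n Ps _.
have Ht : alg_time (run_alg Ps) <= 11 * \sum_(P <- Ps) maxn 1 (wt P) * 3 ^ wt P.
  rewrite /alg_time /run_alg time_run /= add0n big_distrr /=.
  by apply: (sum_le_all (Q := predT)) => [|P _]; [exact: all_predT|exact: stepcost_le].
have Hs : alg_space (run_alg Ps) <= 11 * \sum_(P <- Ps) maxn 1 (wt P) * 2 ^ wt P.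
  apply: (leq_trans (space_run Ps)); rewrite big_distrr /=.
  apply: (sum_le_all (Q := predT)) => [|P _]; first exact: all_predT.
  by apply: (leq_trans (keyspace_le P)); rewrite leq_mul2r orbT.
split=> //; split=> // k Hk; split.
  apply: (leq_trans Ht); rewrite leq_mul2l; apply/orP; right.
  exact: (sum_le_k (F := fun w => maxn 1 w * 3 ^ w) (homo_f _) Hk).
apply: (leq_trans Hs); rewrite leq_mul2l; apply/orP; right.
exact: (sum_le_k (F := fun w => maxn 1 w * 2 ^ w) (homo_f _) Hk).
Qed.
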